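(* Let $R$ be a commutative unital ring such that every proper quotient of $R/\operatorname{Jac}(R)$ has Bass stable rank $1$, where $\operatorname{Jac}(R)$ denotes the Jacobson radical of $R$ (the intersection of all maximal ideals of $R$). Then $\operatorname{sr}(R) \le 2$.
   Context: Rings are commutative and unital. A row $(r_1,\dots,r_n)\in R^n$ is unimodular if $\sum_i R r_i = R$; $\operatorname{Um}_n(R)$ denotes the set of unimodular rows of size $n$. A row $(r_1,\dots,r_{n+1})\in\operatorname{Um}_{n+1}(R)$ ($n>0$) is stable if there are $s_1,\dots,s_n\in R$ with $(r_1+s_1r_{n+1},\dots,r_n+s_nr_{n+1})\in\operatorname{Um}_n(R)$. An integer $n>0$ lies in the stable range of $R$ if every row in $\operatorname{Um}_{n+1}(R)$ is stable, and the Bass stable rank $\operatorname{sr}(R)$ is the least integer in the stable range of $R$. *)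

(* Defs.v *)
From mathcomp Require Import all_boot all_algebra.
Set Implicit Arguments. Unset Strict Implicit. Unset Printing Implicit Defensive.
Import GRing.Theory.
Local Open Scope ring_scope.

Section Defs.
Variable R : comPzRingType.

Definition is_ideal (I : R -> Prop) : Prop :=
  [/\ I 0, (forall x y, I x -> I y -> I (x + y)) & (forall a x, I x -> I (a * x))].

Definition is_maximal_ideal (M : R -> Prop) : Prop :=
  [/\ is_ideal M, ~ M 1 &
      forall J, is_ideal J -> (forall x, M x -> J x) -> J 1 \/ (forall x, J x -> M x)].

Definition Jac (x : R) : Prop := forall M, is_maximal_ideal M -> M x.

Definition unimodular (n : nat) (r : 'I_n -> R) : Prop :=
  exists c : 'I_n -> R, \sum_(i < n) c i * r i = 1.

Definition stable_row (n : nat) (r : 'I_n.+1 -> R) : Prop :=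
  exists s : 'I_n -> R, unimodular (fun i : 'I_n => r (widen_ord (leqnSn n) i) + s i * r ord_max).

Definition in_stable_range (n : nat) : Prop :=
  (0 < n)%N /\ forall r : 'I_n.+1 -> R, unimodular r -> stable_row r.

Definition sr_le (m : nat) : Prop := exists n, (n <= m)%N /\ in_stable_range n.

(* The same notions for the quotient ring R/I, written via representatives in R:
   the image of r in (R/I)^n is unimodular iff sum c_i r_i - 1 lies in I. *)
Definition unimodular_mod (I : R -> Prop) (n : nat) (r : 'I_n -> R) : Prop :=
  exists c : 'I_n -> R, I (\sum_(i < n) c i * r i - 1).

Definition stable_row_mod (I : R -> Prop) (n : nat) (r : 'I_n.+1 -> R) : Prop :=
  exists s : 'I_n -> R,
    unimodular_mod I (fun i : 'I_n => r (widen_ord (leqnSn n) i) + s i * r ord_max).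

Definition in_stable_range_mod (I : R -> Prop) (n : nat) : Prop :=
  (0 < n)%N /\ forall r : 'I_n.+1 -> R, unimodular_mod I r -> stable_row_mod I r.

(* sr(R/I) = 1 : 1 lies in the stable range of R/I (1 is then the least one). *)
Definition sr_quot_eq1 (I : R -> Prop) : Prop := in_stable_range_mod I 1.

End Defs.

(* Main.v *)
Require Import Defs.
From mathcomp Require Import all_boot all_algebra.
From mathcomp Require Import ring.
From mathcomp Require Import boolp classical_sets.
Import GRing.Theory.

Section Aux.
Local Open Scope ring_scope.
Variable R : comPzRingType.

Lemma exists_max (K : R -> Prop) : is_ideal K -> ~ K 1 ->
  exists M, is_maximal_ideal M /\ (forall x, K x -> M x).
Proof.
move=> [K0 KD KM] K1.
pose P := fun A : set R => (forall x, ~ A x) \/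
   [/\ is_ideal A, ~ A 1 & forall x, K x -> A x].
have [A [PA Amax]] : exists A, P A /\ forall B, (A `<` B)%classic -> ~ P B.
  apply: Zorn_bigcup => F FP Ftot.
  case: (pselect (exists X, F X /\ exists x, X x)) => [[X0 [FX0 [x0 Xx0]]]|none]; last first.
    by left => x [X FX Xx]; apply: none; exists X; split=> //; exists x.
  have idl X : F X -> forall x, X x -> [/\ is_ideal X, ~ X 1 & forall x, K x -> X x].
    by move=> FX x Xx; case: (FP X FX) => // /(_ x).
  have [[I0 _ _] I1 IK] := idl X0 FX0 x0 Xx0.
  right; split.
  - split; first by exists X0.
    + move=> x y [X FX Xx] [Y FY Yy].
      have [[_ XD _] _ _] := idl X FX x Xx.
      have [[_ YD _] _ _] := idl Y FY y Yy.
      case: (Ftot X Y FX FY) => XY.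
        by exists Y => //; apply: YD => //; apply: XY.
      by exists X => //; apply: XD => //; apply: XY.
    + move=> a x [X FX Xx]; exists X => //.
      by have [[_ _ XM] _ _] := idl X FX x Xx; apply: XM.
  - by move=> [X FX Xx]; have [_ X1 _] := idl X FX 1 Xx; apply: X1.
  - by move=> x Kx; exists X0 => //; apply: IK.
have [AI A1 AK] : [/\ is_ideal A, ~ A 1 & forall x, K x -> A x].
  case: PA => // A0; exfalso; apply: (Amax K).
    split; first by move=> x /A0.
    by move=> /(_ 0 K0) /A0.
  by right.
exists A; split => //; split => // J JI AJ.
case: (pselect (J 1)) => J1; first by left.
case: (pselect (forall x, J x -> A x)) => JA; first by right.
exfalso; apply: (Amax J); first by split.
by right; split => // x /AK /AJ.
Qed.

Lemma Jac_unit (j : R) : Jac j -> exists u, u * (1 + j) = 1.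
Proof.
move=> Jj.
pose K := fun x : R => exists r, x = r * (1 + j).
case: (pselect (K 1)) => [[r Hr]|K1]; first by exists r.
have KI : is_ideal K.
  split; first by exists 0; rewrite mul0r.
    by move=> x y [r ->] [s ->]; exists (r + s); rewrite mulrDl.
  by move=> a x [r ->]; exists (a * r); rewrite mulrA.
have [M [Mmax KM]] := @exists_max K KI K1.
have [[_ MD MM] M1 _] := Mmax.
exfalso; apply: M1.
have H1 : M (1 + j) by apply: KM; exists 1; rewrite mul1r.
have Hj : M ((-1) * j) by apply: MM; exact: Jj.
have -> : (1:R) = (1 + j) + (-1) * j by ring.
exact: MD.
Qed.

Lemma Jac0 : Jac (0 : R).
Proof. by move=> M [[]]. Qed.
Lemma JacD (x y : R) : Jac x -> Jac y -> Jac (x + y).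
Proof. by move=> Jx Jy M HM; case: (HM) => [[_ D _] _ _]; apply: D; [apply: Jx|apply: Jy]. Qed.
Lemma JacM (a x : R) : Jac x -> Jac (a * x).
Proof. by move=> Jx M HM; case: (HM) => [[_ _ Mu] _ _]; apply: Mu; apply: Jx. Qed.

Lemma unimod2 (j x y p q : R) : Jac j -> p * x + q * y = 1 + j ->
  exists p' q', p' * x + q' * y = 1.
Proof.
move=> Jj E; have [u Hu] := @Jac_unit j Jj.
exists (u * p), (u * q); rewrite -Hu -E; ring.
Qed.

Definition Hyp := (forall I : R -> Prop, is_ideal I ->
     (forall x : R, Jac x -> I x) -> (exists x, I x /\ ~ Jac x) ->
     sr_quot_eq1 I).

Lemma step (a b c x y z : R) : Hyp -> ~ Jac a -> x * a + y * b + z * c = 1 ->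
  exists s p q, p * a + q * (b + s * c) = 1.
Proof.
move=> H Ja E.
pose I := fun t : R => exists r, Jac (t - r * a).
have II : is_ideal I.
  split; first by exists 0; rewrite mul0r subr0; apply: Jac0.
    move=> u v [r Hr] [t Ht]; exists (r + t).
    have -> : u + v - (r + t) * a = (u - r * a) + (v - t * a) by ring.
    exact: JacD.
  move=> e u [r Hr]; exists (e * r).
  have -> : e * u - e * r * a = e * (u - r * a) by ring.
  exact: JacM.
have IJ : forall t, Jac t -> I t by move=> t Jt; exists 0; rewrite mul0r subr0.
have Ia : exists t, I t /\ ~ Jac t.
  by exists a; split => //; exists 1; rewrite mul1r subrr; apply: Jac0.
have [_ Hst] := H I II IJ Ia.
have := Hst (fun i : 'I_2 => if val i == 0%N then b else c).
case.
  exists (fun i : 'I_2 => if val i == 0%N then y else z).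
  rewrite !big_ord_recl big_ord0 /=.
  exists (- x).
  have -> : y * b + (z * c + 0) - 1 - - x * a = x * a + y * b + z * c - 1 by ring.
  by rewrite E subrr; apply: Jac0.
move=> s [d Hd]; rewrite big_ord1 /= in Hd.
case: Hd => r Hr.
have [p [q Hpq]] := @unimod2 _ a (b + s ord0 * c) (- r) (d ord0) Hr ltac:(ring).
by exists (s ord0), p, q.
Qed.

Lemma core (a b c x y z : R) : Hyp -> x * a + y * b + z * c = 1 ->
  exists s1 s2 p q, p * (a + s1 * c) + q * (b + s2 * c) = 1.
Proof.
move=> H E.
case: (pselect (Jac a)) => Ja; last first.
  have [s [p [q Hpq]]] := @step a b c x y z H Ja E.
  by exists 0, s, p, q; rewrite mul0r addr0.
case: (pselect (Jac b)) => Jb; last first.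
  have E' : y * b + x * a + z * c = 1 by rewrite -E; ring.
  have [s [p [q Hpq]]] := @step b a c y x z H Jb E'.
  by exists s, 0, q, p; rewrite mul0r addr0 -Hpq; ring.
have Jj : Jac (- x * a + - y * b) by apply: JacD; apply: JacM.
have [u Hu] := @Jac_unit _ Jj.
exists (u * z * (1 - a)), 0, 1, 0.
rewrite mul1r mul0r addr0.
have -> : a + u * z * (1 - a) * c = a + (1 - a) * (u * (z * c)) by ring.
have -> : z * c = 1 + (- x * a + - y * b) by rewrite -E; ring.
by rewrite Hu mulr1 addrC subrK.
Qed.
End Aux.

Theorem mainTheorem5 (R : comPzRingType) :
  (forall I : R -> Prop, is_ideal I ->
     (forall x, Jac x -> I x) -> (exists x, I x /\ ~ Jac x) ->
     sr_quot_eq1 I) ->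
  sr_le R 2.
Proof.
move=> H; exists 2%N; split => //; split => // r [c Hc].
rewrite !big_ord_recl big_ord0 /= in Hc.
have e2 : lift ord0 (lift ord0 ord0) = ord_max :> 'I_3 by apply: val_inj.
have e0 : widen_ord (leqnSn 2) ord0 = ord0 :> 'I_3 by apply: val_inj.
have e1 : widen_ord (leqnSn 2) (lift ord0 ord0) = lift ord0 ord0 :> 'I_3 by apply: val_inj.
rewrite e2 in Hc.
have E : (c ord0 * r ord0 + c (lift ord0 ord0) * r (lift ord0 ord0) + c ord_max * r ord_max = 1)%R.
  by rewrite -Hc addr0 addrA.
have [s1 [s2 [p [q Hpq]]]] := @core R _ _ _ _ _ _ H E.
exists (fun i : 'I_2 => if val i == 0%N then s1 else s2).
exists (fun i : 'I_2 => if val i == 0%N then p else q).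
rewrite !big_ord_recl big_ord0 /= e0 e1 addr0.
exact: Hpq.
Qed.
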